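(* Let $n\ge 0$ and let $\Psi=(\psi_0,\dots,\psi_n)$ with $\psi_k\in(-\tfrac{\pi}{2},\tfrac{\pi}{2})$ for all $k$. For $x\in[-1,1]$ let $\theta\in[0,\pi]$ satisfy $\cos\theta=x$. (a) Define $\boldsymbol\gamma:\mathbb Z\to\mathbb C$ by $\gamma_k:=\tan\psi_k$ for $k=0,\dots,n$ and $\gamma_k=0$ otherwise. Then for all $\theta\in[0,\pi]$, $$\begin{pmatrix}1&0\\0&i\end{pmatrix} H\, U_n(\Psi,\cos\theta)\, H \begin{pmatrix}1&0\\0&-i\end{pmatrix}=\overbrace{\boldsymbol\gamma}(e^{2i\theta})\begin{pmatrix}e^{in\theta}&0\\0&e^{-in\theta}\end{pmatrix}.$$ (b) Define $\boldsymbol\gamma$ by $\gamma_k:=i\tan\psi_k$ for $k=0,\dots,n$ and $\gamma_k=0$ otherwise. Then for all $\theta\in[0,\pi]$, $$H\, U_n(\Psi,\cos\theta)\, H=\overbrace{\boldsymbol\gamma}(e^{2i\theta})\begin{pmatrix}e^{in\theta}&0\\0&e^{-in\theta}\end{pmatrix}.$$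
   Context: $Z=\begin{pmatrix}1&0\\0&-1\end{pmatrix}$, $H=\frac1{\sqrt2}\begin{pmatrix}1&1\\1&-1\end{pmatrix}$. For $x\in[-1,1]$, $W(x):=\begin{pmatrix}x& i\sqrt{1-x^2}\\ i\sqrt{1-x^2}&x\end{pmatrix}$, and $U_n(\Psi,x):=e^{i\psi_0 Z}\prod_{k=1}^n\big(W(x)e^{i\psi_k Z}\big)$ (ordered product, factors with increasing $k$ from left to right). For a compactly supported $\boldsymbol\gamma:\mathbb Z\to\mathbb C$ supported in $[m,n']$, its nonlinear Fourier transform (NLFT) is the matrix-valued function $\overbrace{\boldsymbol\gamma}(z):=\prod_{k=m}^{n'}\frac{1}{\sqrt{1+|\gamma_k|^2}}\begin{pmatrix}1&\gamma_k z^k\\-\overline{\gamma_k}z^{-k}&1\end{pmatrix}$, $z\in\mathbb C\setminus\{0\}$, with the product ordered by increasing $k$ from left to right. *)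

(* Defs.v *)
From HB Require Import structures.
From mathcomp Require Import all_boot all_order all_algebra.
From mathcomp Require Import complex.
From mathcomp Require Import reals trigo.
Set Implicit Arguments. Unset Strict Implicit. Unset Printing Implicit Defensive.
Import Order.TTheory GRing.Theory Num.Theory.
Local Open Scope ring_scope.
Local Open Scope complex_scope.

Section Defs.
Variable R : realType.
Local Notation C := R[i].

Definition Ii : C := 0 +i* 1.

Definition mx2 (a b c d : C) : 'M[C]_2 :=
  \matrix_(i < 2, j < 2)
    if (i == 0 :> nat) then (if (j == 0 :> nat) then a else b)
    else (if (j == 0 :> nat) then c else d).

Definition expi (t : R) : C := (cos t) +i* (sin t).

Definition Zm : 'M[C]_2 := mx2 1 0 0 (-1).
Definition Hm : 'M[C]_2 :=
  ((Num.sqrt (2 : R))^-1)%:C *: mx2 1 1 1 (-1).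

Definition Wm (x : R) : 'M[C]_2 :=
  let s := Ii * (Num.sqrt (1 - x ^+ 2))%:C in mx2 (x%:C) s s (x%:C).

Definition expiZ (psi : R) : 'M[C]_2 := mx2 (expi psi) 0 0 (expi (- psi)).

Definition Un (n : nat) (Psi : nat -> R) (x : R) : 'M[C]_2 :=
  expiZ (Psi 0%N) * \prod_(1 <= k < n.+1) (Wm x * expiZ (Psi k)).

Definition csqnorm (g : C) : R := (complex.Re g) ^+ 2 + (complex.Im g) ^+ 2.

Definition nlft_factor (g : int -> C) (k : int) (z : C) : 'M[C]_2 :=
  ((Num.sqrt (1 + csqnorm (g k)))^-1)%:C *:
    mx2 1 (g k * z ^ k) (- (conjc (g k)) * z ^ (- k)) 1.

Definition nlft (g : int -> C) (m : int) (len : nat) (z : C) : 'M[C]_2 :=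
  \prod_(i < len.+1) nlft_factor g (m + (i : nat)%:Z) z.

End Defs.

(* Main.v *)
Require Import Defs.
From HB Require Import structures.
From mathcomp Require Import all_boot all_order all_algebra.
From mathcomp Require Import complex.
From mathcomp Require Import reals trigo.
From mathcomp Require Import ring lra.
Import Order.TTheory GRing.Theory Num.Theory.
Local Open Scope ring_scope.
Local Open Scope complex_scope.

Section S.
Variable R : realType.
Local Notation C := R[i].

Lemma mx2_mul (a b c d a' b' c' d' : C) :
  mx2 a b c d * mx2 a' b' c' d' =
  mx2 (a*a'+b*c') (a*b'+b*d') (c*a'+d*c') (c*b'+d*d').
Proof.
apply/matrixP => i j; rewrite !mxE !big_ord_recl big_ord0 !mxE /=.
move: i j => [[|[|i]] Hi] [[|[|j]] Hj] /=; rewrite ?addr0 //.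
Qed.

Lemma mx2_scale (k a b c d : C) : k *: mx2 a b c d = mx2 (k*a) (k*b) (k*c) (k*d).
Proof.
apply/matrixP => i j; rewrite !mxE.
by move: i j => [[|[|i]] Hi] [[|[|j]] Hj].
Qed.

Lemma mx2_1 : mx2 1 0 0 1 = 1 :> 'M[C]_2.
Proof.
apply/matrixP => i j; rewrite !mxE.
by move: i j => [[|[|i]] Hi] [[|[|j]] Hj].
Qed.


Ltac cnorm := rewrite /Ii ?(-complexr0);
  try change (1 : C) with ((1:R) +i* (0:R));
  try change (0 : C) with ((0:R) +i* (0:R)); simpc.

Lemma expiD (a b : R) : expi (a+b) = expi a * expi b.
Proof. rewrite /expi cosD sinD. simpc. congr (_ +i* _); ring. Qed.

Lemma expi0 : expi (0:R) = 1.
Proof. by rewrite /expi cos0 sin0. Qed.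

Lemma HH : Hm R * Hm R = 1.
Proof.
rewrite /Hm mx2_scale mx2_mul -mx2_1.
have s2 : Num.sqrt (2:R) ^+ 2 = 2 by rewrite sqr_sqrtr.
have s0 : Num.sqrt (2:R) != 0 by rewrite sqrtr_eq0 -ltNge.
congr mx2; cnorm; congr (_ +i* _).
all: by rewrite -invfM -expr2 s2; field; done.
Qed.

Definition Dm (t : R) : 'M[C]_2 := mx2 (expi t) 0 0 (expi (-t)).
Definition Ab (p : R) : 'M[C]_2 :=
  mx2 (cos p)%:C (Ii R * (sin p)%:C) (Ii R * (sin p)%:C) (cos p)%:C.
Definition Aa (p : R) : 'M[C]_2 :=
  mx2 (cos p)%:C (sin p)%:C (- (sin p)%:C) (cos p)%:C.

Lemma Hm_conj M : Hm R * M * Hm R =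
  ((2:R)^-1)%:C *: (mx2 1 1 1 (-1) * M * mx2 1 1 1 (-1)).
Proof.
rewrite /Hm -scalerAl -scalerAr -scalerAl scalerA -rmorphM.
have s2 : Num.sqrt (2:R) ^+ 2 = 2 by rewrite sqr_sqrtr.
by rewrite -invfM -expr2 s2.
Qed.

Lemma HWH (t : R) : 0 <= t <= pi -> Hm R * Wm (cos t) * Hm R = Dm t.
Proof.
move=> ht; rewrite Hm_conj /Wm.
have -> : Num.sqrt (1 - cos t ^+2) = sin t.
  by rewrite -sin2cos2 sqrtr_sqr ger0_norm // sin_ge0_pi.
rewrite !mx2_mul mx2_scale /Dm /expi.
congr mx2; cnorm; congr (_ +i* _); rewrite ?cosN ?sinN; field; done.
Qed.

Lemma HEH (p : R) : Hm R * expiZ p * Hm R = Ab p.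
Proof.
rewrite Hm_conj /expiZ !mx2_mul mx2_scale /Ab /expi cosN sinN.
congr mx2; cnorm; congr (_ +i* _); field; done.
Qed.


Lemma conj2 (M N X Y : 'M[C]_2) : N * M = 1 ->
  M * (X * Y) * N = (M * X * N) * (M * Y * N).
Proof.
move=> h; rewrite !mulrA -(mulrA (M * X) N M) h mulr1 //.
Qed.

Lemma conj_prod (M N : 'M[C]_2) (F : nat -> 'M[C]_2) (r : seq nat) :
  N * M = 1 -> M * N = 1 ->
  M * (\prod_(i <- r) F i) * N = \prod_(i <- r) (M * F i * N).
Proof.
move=> h1 h2; elim: r => [|a r IH]; first by rewrite !big_nil mulr1.
by rewrite !big_cons conj2 // IH.
Qed.

Lemma HUH n Psi (t : R) : 0 <= t <= pi ->
  Hm R * Un n Psi (cos t) * Hm R =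
  Ab (Psi 0%N) * \prod_(1 <= k < n.+1) (Dm t * Ab (Psi k)).
Proof.
move=> ht; rewrite /Un conj2 ?HH // HEH conj_prod ?HH //; congr (_ * _).
by apply: eq_bigr => k _; rewrite conj2 ?HH // HWH // HEH.
Qed.

Lemma expiN (t : R) : expi (- t) = (expi t)^-1.
Proof.
have h : expi t * expi (-t) = 1 by rewrite -expiD subrr expi0.
have nz : expi t != 0.
  by apply/eqP => e; move: h; rewrite e mul0r => /eqP; rewrite eq_sym oner_eq0.
by rewrite -[expi (-t)]mul1r -(mulVf nz) -mulrA h mulr1.
Qed.

Lemma expi_neq0 (t : R) : expi t != 0.
Proof.
apply/eqP => e; have := expiD t (-t); rewrite subrr expi0 e mul0r => /eqP.
by rewrite oner_eq0.
Qed.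

Lemma expiX (t : R) k : expi t ^+ k = expi (k%:R * t).
Proof.
elim: k => [|k IH]; first by rewrite expr0 mul0r expi0.
by rewrite exprS IH mulrS mulrDl mul1r expiD.
Qed.

Lemma DmX (t : R) k : Dm t ^+ k = Dm (k%:R * t).
Proof.
elim: k => [|k IH]; first by rewrite expr0 mul0r /Dm oppr0 expi0 mx2_1.
rewrite exprS IH /Dm mx2_mul !mulr0 !mul0r !addr0 !add0r.
by rewrite mulrS mulrDl mul1r opprD !expiD.
Qed.

Lemma telescope (D : 'M[C]_2) (B F : nat -> 'M[C]_2) m :
 (forall k, (k <= m)%N -> F k * D ^+ k = D ^+ k * B k) ->
 B 0%N * \prod_(1 <= k < m.+1) (D * B k) = (\prod_(i < m.+1) F i) * D ^+ m.
Proof.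
elim: m => [|m IH] h.
  rewrite big_geq // big_ord_recl big_ord0 !mulr1.
  by have := h 0%N (leqnn _); rewrite expr0 mulr1 mul1r => ->.
rewrite big_nat_recr //= big_ord_recr /= mulrA IH; last first.
  by move=> k hk; apply: h; rewrite (leq_trans hk).
by rewrite -mulrA (mulrA (D ^+ m)) -exprSr -h // mulrA.
Qed.

Lemma scal_tan (p : R) : 0 < cos p ->
  (Num.sqrt (1 + tan p ^+ 2))^-1 = cos p.
Proof.
move=> hc; have hc0 : cos p != 0 by rewrite gt_eqF.
have -> : 1 + tan p ^+ 2 = (cos p)^-1 ^+ 2.
  rewrite /tan exprMn sin2cos2; field; done.
by rewrite sqrtr_sqr ger0_norm ?invrK // invr_ge0 ltW.
Qed.


Lemma keyb (g : int -> C) (t p : R) (k : nat) : 0 < cos p ->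
  g k%:Z = Ii R * (tan p)%:C ->
  nlft_factor g (0 + k%:Z) (expi (2 * t)) * Dm t ^+ k = Dm t ^+ k * Ab p.
Proof.
move=> hc hg; rewrite /nlft_factor add0r hg DmX.
have hc0 : cos p != 0 by rewrite gt_eqF.
have -> : Ii R * (tan p)%:C = 0 +i* tan p by cnorm.
have -> : csqnorm (0 +i* tan p) = tan p ^+ 2 by rewrite /csqnorm /= expr0n add0r.
rewrite scal_tan // -exprnP -exprnN expiX.
have -> : k%:R * (2 * t) = k%:R * t + k%:R * t by ring.
rewrite expiD /Dm expiN.
have hE := expi_neq0 (k%:R * t); set E := expi (k%:R * t).
have -> : - conjc (0 +i* tan p) = Ii R * (tan p)%:C by cnorm.
have -> : 0 +i* tan p = Ii R * (tan p)%:C by cnorm.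
rewrite /tan fmorph_div /Ab mx2_scale !mx2_mul.
have hcC : (cos p)%:C != 0 by rewrite (inj_eq (@complexI R)).
congr mx2; field; rewrite ?hE ?hcC //.
Qed.


Lemma keya (g : int -> C) (t p : R) (k : nat) : 0 < cos p ->
  g k%:Z = (tan p)%:C ->
  nlft_factor g (0 + k%:Z) (expi (2 * t)) * Dm t ^+ k = Dm t ^+ k * Aa p.
Proof.
move=> hc hg; rewrite /nlft_factor add0r hg DmX.
have hc0 : cos p != 0 by rewrite gt_eqF.
have -> : csqnorm (tan p)%:C = tan p ^+ 2 by rewrite /csqnorm /= expr0n addr0.
rewrite scal_tan // -exprnP -exprnN expiX.
have -> : k%:R * (2 * t) = k%:R * t + k%:R * t by ring.
rewrite expiD /Dm expiN conjc_real.
have hE := expi_neq0 (k%:R * t); set E := expi (k%:R * t).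
rewrite /tan fmorph_div /Aa mx2_scale !mx2_mul.
have hcC : (cos p)%:C != 0 by rewrite (inj_eq (@complexI R)).
congr mx2; field; rewrite ?hE ?hcC //.
Qed.

Definition Jm : 'M[C]_2 := mx2 1 0 0 (Ii R).
Definition Jm' : 'M[C]_2 := mx2 1 0 0 (- Ii R).

Lemma JJ' : Jm * Jm' = 1.
Proof. rewrite /Jm /Jm' mx2_mul -mx2_1; congr mx2; cnorm; try done; congr (_ +i* _); ring. Qed.
Lemma J'J : Jm' * Jm = 1.
Proof. rewrite /Jm /Jm' mx2_mul -mx2_1; congr mx2; cnorm; try done; congr (_ +i* _); ring. Qed.
Lemma JAJ p : Jm * Ab p * Jm' = Aa p.
Proof. rewrite /Jm /Jm' /Ab /Aa !mx2_mul; congr mx2; cnorm; try done; congr (_ +i* _); ring. Qed.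
Lemma JDJ t : Jm * Dm t * Jm' = Dm t.
Proof. rewrite /Jm /Jm' /Dm /expi !mx2_mul; congr mx2; cnorm; try done; congr (_ +i* _); ring. Qed.

End S.

Theorem lemma3p1 (R : realType) (n : nat) (Psi : nat -> R)
  (hPsi : forall k : nat, (k <= n)%N -> - (pi / 2) < Psi k < pi / 2) :
  (* (a) gamma_k = tan psi_k on [0, n], 0 elsewhere *)
  (let gam := fun k : int =>
      if (0 <= k) && (k <= n%:Z) then (tan (Psi `|k|%N))%:C else 0 in
   forall theta : R, 0 <= theta <= pi ->
     mx2 1 0 0 (Ii R) * Hm R * Un n Psi (cos theta) * Hm R * mx2 1 0 0 (- Ii R)
     = nlft gam 0 n (expi (2 * theta))
         * mx2 (expi (n%:R * theta)) 0 0 (expi (- (n%:R * theta))))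
  /\
  (* (b) gamma_k = i tan psi_k on [0, n], 0 elsewhere *)
  (let gam := fun k : int =>
      if (0 <= k) && (k <= n%:Z) then Ii R * (tan (Psi `|k|%N))%:C else 0 in
   forall theta : R, 0 <= theta <= pi ->
     Hm R * Un n Psi (cos theta) * Hm R
     = nlft gam 0 n (expi (2 * theta))
         * mx2 (expi (n%:R * theta)) 0 0 (expi (- (n%:R * theta)))).
Proof.
split.
- move=> gam th hth.
  have e : mx2 1 0 0 (Ii R) * Hm R * Un n Psi (cos th) * Hm R * mx2 1 0 0 (- Ii R)
     = Jm R * (Hm R * Un n Psi (cos th) * Hm R) * Jm' R by rewrite !mulrA.
  rewrite e HUH // conj2 ?J'J // conj_prod ?J'J ?JJ' // JAJ.
  have e2 : \prod_(1 <= k < n.+1) (Jm R * (Dm R th * Ab R (Psi k)) * Jm' R)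
          = \prod_(1 <= k < n.+1) (Dm R th * Aa R (Psi k)).
    by apply: eq_bigr => k _; rewrite conj2 ?J'J // JDJ JAJ.
  rewrite e2 -[mx2 (expi _) 0 0 _]/(Dm R (n%:R * th)) -DmX /nlft.
  apply: (@telescope R (Dm R th) (fun k => Aa R (Psi k)) (fun i : nat => nlft_factor gam (0 + i%:Z) (expi (2 * th)))) => k hk.
  apply: keya; first exact: cos_gt0_pihalf (hPsi k hk).
  by rewrite /gam /= lez_nat hk.
- move=> gam th hth.
  rewrite HUH // -[mx2 (expi _) 0 0 _]/(Dm R (n%:R * th)) -DmX /nlft.
  apply: (@telescope R (Dm R th) (fun k => Ab R (Psi k)) (fun i : nat => nlft_factor gam (0 + i%:Z) (expi (2 * th)))) => k hk.
  apply: keyb; first exact: cos_gt0_pihalf (hPsi k hk).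
  by rewrite /gam /= lez_nat hk.
Qed.
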